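(* Consider ${\sf BubbleRank}$ (defined below) run with parameter $\delta\in(0,1)$ in a stochastic click bandit satisfying A1–A5 with $\alpha(1)>\dots>\alpha(K)>0$, and let $$\mathbf{P}_t=\{(i,j)\in[K]^2: i<j,\ |\bar{\mathbf{R}}_t^{-1}(i)-\bar{\mathbf{R}}_t^{-1}(j)|=1,\ \mathbf{s}_{t-1}(i,j)\le2\sqrt{\mathbf{n}_{t-1}(i,j)\log(1/\delta)}\}.$$ Then on the event $\mathcal{E}$ defined below, for every $t\in[n]$, $$\sum_{k=1}^K\big(\chi(\mathcal{R}^*,k)\alpha(k)-\chi(\mathbf{R}_t,k)\alpha(\mathbf{R}_t(k))\big)\le3K\chi_{\max}\sum_{i=1}^K\sum_{j=i+1}^K\mathbb{1}\{(i,j)\in\mathbf{P}_t\}(\alpha(i)-\alpha(j)).$$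
   Context: Model. Items $[K]$; a list $\mathcal{R}$ orders all $K$ items, $\mathcal{R}(k)$ is the item at position $k$, $\mathcal{R}^{-1}(i)$ the position of $i$; $\Pi_K$ the set of lists. At time $t$, $(\mathbf{A}_t,\mathbf{X}_t)\in\{0,1\}^K\times\{0,1\}^{\Pi_K\times[K]}$ is drawn i.i.d. from a product distribution; the learner displays $\mathbf{R}_t$ and observes $\mathbf{c}_t(k)=\mathbf{X}_t(\mathbf{R}_t,k)\mathbf{A}_t(\mathbf{R}_t(k))$. $\alpha=\mathbb{E}[\mathbf{A}_t]$, $\chi=\mathbb{E}[\mathbf{X}_t]$, $r(\mathcal{R},\alpha,\chi)=\sum_k\chi(\mathcal{R},k)\alpha(\mathcal{R}(k))$, $\mathcal{R}^*=(1,\dots,K)$, $\chi_{\max}=\chi(\mathcal{R}^*,1)$. Assumptions for all lists $\mathcal{R},\mathcal{R}'$ and positions $k<\ell$: (A1) $r(\mathcal{R},\alpha,\chi)\le r(\mathcal{R}^*,\alpha,\chi)$; (A2) $\{\mathcal{R}(1..k-1)\}=\{\mathcal{R}'(1..k-1)\}\Rightarrow\chi(\mathcal{R},k)=\chi(\mathcal{R}',k)$; (A3) $\chi(\mathcal{R},k)\ge\chi(\mathcal{R},\ell)$; (A4) if $\mathcal{R},\mathcal{R}'$ differ only by exchanging items at positions $k,\ell$, then $\alpha(\mathcal{R}(k))\le\alpha(\mathcal{R}(\ell))\iff\chi(\mathcal{R},\ell)\ge\chi(\mathcal{R}',\ell)$; (A5) $\chi(\mathcal{R},k)\ge\chi(\mathcal{R}^*,k)$.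 Algorithm ${\sf BubbleRank}$ (initial list $\mathcal{R}_0$, horizon $n$): $\mathbf{s}_0\equiv\mathbf{n}_0\equiv0$, $\bar{\mathbf{R}}_1=\mathcal{R}_0$. For $t=1,\dots,n$: $h=t\bmod2$, $\mathbf{R}_t\leftarrow\bar{\mathbf{R}}_t$; for $k=1,\dots,\lfloor(K-h)/2\rfloor$ with $i=\mathbf{R}_t(2k-1+h)$, $j=\mathbf{R}_t(2k+h)$: if $\mathbf{s}_{t-1}(i,j)\le2\sqrt{\mathbf{n}_{t-1}(i,j)\log(1/\delta)}$ exchange these two positions with probability $1/2$. Display $\mathbf{R}_t$, observe $\mathbf{c}_t$. $\mathbf{s}_t=\mathbf{s}_{t-1}$, $\mathbf{n}_t=\mathbf{n}_{t-1}$; for each such $k$ with $i=\mathbf{R}_t(2k-1+h)$, $j=\mathbf{R}_t(2k+h)$: if $|\mathbf{c}_t(2k-1+h)-\mathbf{c}_t(2k+h)|=1$, add $\mathbf{c}_t(2k-1+h)-\mathbf{c}_t(2k+h)$ to $\mathbf{s}_t(i,j)$, its negative to $\mathbf{s}_t(j,i)$, and $1$ to $\mathbf{n}_t(i,j),\mathbf{n}_t(j,i)$. Then $\bar{\mathbf{R}}_{t+1}=\bar{\mathbf{R}}_t$; for $k=1,\dots,K-1$ in order with $i=\bar{\mathbf{R}}_{t+1}(k)$, $j=\bar{\mathbf{R}}_{t+1}(k+1)$: if $\mathbf{s}_t(j,i)>2\sqrt{\mathbf{n}_t(j,i)\log(1/\delta)}$ exchange positions $k,k+1$ of $\bar{\mathbf{R}}_{t+1}$.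 Event $\mathcal{E}=\bigcap_{t\in[n]}(\mathcal{E}_{t,1}\cap\mathcal{E}_{t,2})$, where $\mathcal{E}_{t,1}$: for all $i<j$, $\frac{\alpha(i)-\alpha(j)}{\alpha(i)+\alpha(j)}\mathbf{n}_t(i,j)-2\sqrt{\mathbf{n}_t(i,j)\log(1/\delta)}\le\mathbf{s}_t(i,j)$; and $\mathcal{E}_{t,2}$: for all $i>j$, $\mathbf{s}_t(i,j)\le2\sqrt{\mathbf{n}_t(i,j)\log(1/\delta)}$. *)

(* Defs.v *)
(* items/positions are 'I_K (item i+1 of the paper = ordinal i,
   position k+1 of the paper = ordinal k); lists are permutations {perm 'I_K},
   R p = item at position p, (R^-1) i = position of item i. *)
From HB Require Import structures.
From mathcomp Require Import all_boot all_order fingroup perm all_algebra.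
From mathcomp Require Import reals exp.
Set Implicit Arguments. Unset Strict Implicit. Unset Printing Implicit Defensive.
Import Order.TTheory GRing.Theory Num.Theory.
Local Open Scope ring_scope.

Section BubbleRank.
Variable K : nat.
Variable R : realType.

Definition reward (alpha : 'I_K -> R) (chi : {perm 'I_K} -> 'I_K -> R)
  (L : {perm 'I_K}) : R := \sum_(k < K) chi L k * alpha (L k).

Definition swap_pos (L : {perm 'I_K}) (k l : 'I_K) : {perm 'I_K} :=
  (tperm k l * L)%g.

Definition Rstar : {perm 'I_K} := 1%g.

Definition A1 (alpha : 'I_K -> R) (chi : {perm 'I_K} -> 'I_K -> R) := forall L, reward alpha chi L <= reward alpha chi Rstar.
Definition A2 (chi : {perm 'I_K} -> 'I_K -> R) := forall (L L' : {perm 'I_K}) (k : 'I_K),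
  [set L p | p : 'I_K & (p < k)%N] = [set L' p | p : 'I_K & (p < k)%N] ->
  chi L k = chi L' k.
Definition A3 (chi : {perm 'I_K} -> 'I_K -> R) := forall (L : {perm 'I_K}) (k l : 'I_K),
  (k < l)%N -> chi L l <= chi L k.
Definition A4 (alpha : 'I_K -> R) (chi : {perm 'I_K} -> 'I_K -> R) := forall (L : {perm 'I_K}) (k l : 'I_K),
  (k < l)%N -> (alpha (L k) <= alpha (L l) <-> chi (swap_pos L k l) l <= chi L l).
Definition A5 (chi : {perm 'I_K} -> 'I_K -> R) := forall (L : {perm 'I_K}) (k : 'I_K),
  chi Rstar k <= chi L k.

Variable delta : R.

Definition thr (m : nat) : R := 2 * Num.sqrt (m%:R * ln (1 / delta)).
Definition unconf (s : int) (m : nat) : bool := (s%:~R <= thr m).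

Definition pair_items (L : {perm 'I_K}) (p : nat) : option ('I_K * 'I_K) :=
  match (insub p : option 'I_K), (insub p.+1 : option 'I_K) with
  | Some a, Some b => Some (L a, L b)
  | _, _ => None
  end.

Definition adj_swap (L : {perm 'I_K}) (p : nat) : {perm 'I_K} :=
  match (insub p : option 'I_K), (insub p.+1 : option 'I_K) with
  | Some a, Some b => swap_pos L a b
  | _, _ => L
  end.

Record state := State {
  Rbar : {perm 'I_K};
  sst : 'I_K -> 'I_K -> int;
  nst : 'I_K -> 'I_K -> nat }.

(* The pairs examined at time t are the 1-based positions (2k-1+h, 2k+h),
   k = 1..floor((K-h)/2), h = t mod 2, i.e. the 0-based positions (p, p+1)
   with p of the parity of t and p+1 < K. *)

(* displayed list R_t, built from Rbar_t with coin flips coin p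
   (coin p = true means "exchange", used only when allowed) *)
Definition displayed (t : nat) (st : state) (coin : nat -> bool) : {perm 'I_K} :=
  foldl (fun L p =>
    if odd p == odd t then
      match pair_items L p with
      | Some (i, j) => if unconf (sst st i j) (nst st i j) && coin p
                       then adj_swap L p else L
      | None => L
      end
    else L) (Rbar st) (iota 0 K).

Definition upd_s (s : 'I_K -> 'I_K -> int) (i j : 'I_K) (d : int) :=
  fun x y => if (x == i) && (y == j) then s x y + d
             else if (x == j) && (y == i) then s x y - d else s x y.
Definition upd_n (m : 'I_K -> 'I_K -> nat) (i j : 'I_K) :=
  fun x y => if ((x == i) && (y == j)) || ((x == j) && (y == i))
             then (m x y).+1 else m x y.

(* statistics update after observing clicks c (c p = click at 0-based pos p) *)
Definition upd_stats (t : nat) (L : {perm 'I_K}) (c : nat -> bool)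
  (sn : ('I_K -> 'I_K -> int) * ('I_K -> 'I_K -> nat)) :=
  foldl (fun sn p =>
    if odd p == odd t then
      match pair_items L p with
      | Some (i, j) =>
          if c p != c p.+1 then
            (upd_s sn.1 i j ((c p : nat)%:Z - (c p.+1 : nat)%:Z), upd_n sn.2 i j)
          else sn
      | None => sn
      end
    else sn) sn (iota 0 K).

Definition upd_Rbar (L : {perm 'I_K}) (s : 'I_K -> 'I_K -> int)
  (m : 'I_K -> 'I_K -> nat) : {perm 'I_K} :=
  foldl (fun L p =>
    match pair_items L p with
    | Some (i, j) => if ~~ unconf (s j i) (m j i) then adj_swap L p else L
    | None => L
    end) L (iota 0 K.-1).

Definition step (t : nat) (st : state) (coin : nat -> bool) (c : nat -> bool) : state :=
  let Rt := displayed t st coin in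
  let sn := upd_stats t Rt c (sst st, nst st) in
  State (upd_Rbar (Rbar st) sn.1 sn.2) sn.1 sn.2.

(* traj t = (Rbar_{t+1}, s_t, n_t); coin t p, click t p are the randomness
   and the observed clicks at time t (position p, 0-based). *)
Fixpoint traj (R0 : {perm 'I_K}) (coin click : nat -> nat -> bool) (t : nat)
  : state :=
  match t with
  | 0 => State R0 (fun _ _ => 0%Z) (fun _ _ => 0%N)
  | t'.+1 => step t (traj R0 coin click t') (coin t) (click t)
  end.

(* R_t, for t >= 1 *)
Definition Rdisp R0 coin click (t : nat) : {perm 'I_K} :=
  displayed t (traj R0 coin click t.-1) (coin t).

Definition inP R0 coin click (t : nat) (i j : 'I_K) : bool :=
  let st := traj R0 coin click t.-1 in
  let pi := (val ((Rbar st)^-1 i)%g) in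
  let pj := (val ((Rbar st)^-1 j)%g) in
  [&& (i < j)%N, (pi.+1 == pj) || (pj.+1 == pi) & unconf (sst st i j) (nst st i j)].

Definition eventE (alpha : 'I_K -> R) R0 coin click (hor : nat) : Prop :=
  forall t : nat, (1 <= t <= hor)%N ->
    let st := traj R0 coin click t in
    (forall i j : 'I_K, (i < j)%N ->
       (alpha i - alpha j) / (alpha i + alpha j) * (nst st i j)%:R
         - thr (nst st i j) <= (sst st i j)%:~R) /\
    (forall i j : 'I_K, (j < i)%N -> (sst st i j)%:~R <= thr (nst st i j)).

End BubbleRank.

(* Main.v *)
Require Import Defs.
From HB Require Import structures.
From mathcomp Require Import all_boot all_order fingroup perm all_algebra.
From mathcomp Require Import reals exp.
From mathcomp Require Import zify lra.
Set Implicit Arguments. Unset Strict Implicit. Unset Printing Implicit Defensive.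
Import Order.TTheory GRing.Theory Num.Theory.
Local Open Scope ring_scope.

Ltac olia := simpl in *; lia.

Section S.
Variable R : realType.
Variable k : nat.
Local Notation K := k.+1.
Implicit Types (L : {perm 'I_K}).

Lemma swap_posE L (a b w : 'I_K) : swap_pos L a b w = L (tperm a b w).
Proof. by rewrite /swap_pos permM. Qed.

Lemma swap_posV L (a b w : 'I_K) : (swap_pos L a b)^-1%g w = tperm a b (L^-1%g w).
Proof. by rewrite /swap_pos invMg permM tpermV. Qed.

Lemma tperm_val (p0 p1 x : 'I_K) : val (tperm p0 p1 x) =
  if x == p0 then val p1 else if x == p1 then val p0 else val x.
Proof. by rewrite permE /=; case: ifP => //; case: ifP. Qed.

Lemma adj_swapE L (p p1 : 'I_K) : val p1 = (val p).+1 -> adj_swap L p = swap_pos L p p1.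
Proof. by move=> h; rewrite /adj_swap valK -h valK. Qed.

Lemma adj_swap_out L p : (K <= p.+1)%N -> adj_swap L p = L.
Proof.
move=> h; rewrite /adj_swap (@insubF _ _ _ p.+1); last by apply/negbTE; rewrite -leqNgt.
by case: insub.
Qed.

Lemma pair_itemsE L (p p1 : 'I_K) : val p1 = (val p).+1 -> pair_items L p = Some (L p, L p1).
Proof. by move=> h; rewrite /pair_items valK -h valK. Qed.

Lemma pair_items_out L p : (K <= p.+1)%N -> pair_items L p = None.
Proof.
move=> h; rewrite /pair_items (@insubF _ _ _ p.+1); last by apply/negbTE; rewrite -leqNgt.
by case: insub.
Qed.

Lemma pair_itemsP L p i j : pair_items L p = Some (i, j) ->
  exists p0 p1 : 'I_K, [/\ val p0 = p, val p1 = p.+1, i = L p0 & j = L p1].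
Proof.
case: (ltnP p.+1 K) => h.
  have h0 : (p < K)%N by apply: ltnW.
  rewrite (@pair_itemsE L (Ordinal h0) (Ordinal h)) // => -[<- <-].
  by exists (Ordinal h0), (Ordinal h).
by rewrite pair_items_out.
Qed.

Lemma neq_val (x y : 'I_K) : x != y -> val x <> val y.
Proof. by move=> /eqP h /val_inj. Qed.

Lemma posE L x (p : 'I_K) : (L^-1%g x == p) = (x == L p).
Proof. by rewrite -(inj_eq (@perm_inj _ L)) permKV. Qed.

Section Pass.
Variable delta : R.
Variables (s : 'I_K -> 'I_K -> int) (n : 'I_K -> 'I_K -> nat).
Hypothesis E2 : forall a b : 'I_K, (a < b)%N -> unconf delta (s b a) (n b a).

Definition pstep L p := match pair_items L p with
    | Some (i, j) => if ~~ unconf delta (s j i) (n j i) then adj_swap L p else L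
    | None => L
    end.

Lemma upd_RbarE L : upd_Rbar delta L s n = foldl pstep L (iota 0 k).
Proof. by []. Qed.

Lemma pstep_cases L p : pstep L p = L \/ exists p0 p1 : 'I_K,
  [/\ val p0 = p, val p1 = p.+1, (L p1 < L p0)%N,
      ~~ unconf delta (s (L p1) (L p0)) (n (L p1) (L p0)) &
      pstep L p = swap_pos L p0 p1].
Proof.
case: (ltnP p.+1 K) => h; last by left; rewrite /pstep pair_items_out.
have h0 : (p < K)%N by apply: ltnW.
set p0 := Ordinal h0; set p1 := Ordinal h.
rewrite /pstep (@pair_itemsE L p0 p1) //.
case: ifP => hc; last by left.
right; exists p0, p1; split => //; last by rewrite (@adj_swapE L p0 p1).
case: (ltngtP (L p1) (L p0)) => // hlt.
  by move: hc; rewrite E2.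
move/val_inj/perm_inj: hlt => /(congr1 val) /=; lia.
Qed.

Lemma pass_mono ps L (i j : 'I_K) : (i < j)%N -> (L^-1%g i < L^-1%g j)%N ->
  ((foldl pstep L ps)^-1%g i < (foldl pstep L ps)^-1%g j)%N.
Proof.
move=> hij; elim: ps L => //= p ps IH L hL; apply: IH.
case: (pstep_cases L p) => [->//|[p0 [p1 [h0 h1 hlt _ ->]]]].
rewrite !swap_posV !tperm_val.
have nb : ~ (L^-1%g i = p0 /\ L^-1%g j = p1).
  move=> [ha hb]; move: hlt; rewrite -ha -hb !permKV; lia.
have {}nb : ~ (val (L^-1%g i) = val p0 /\ val (L^-1%g j) = val p1).
  by move=> [/val_inj ? /val_inj ?]; apply: nb.
case: (eqVneq (L^-1%g i) p0) => [/(congr1 val) ea|/neq_val na];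
case: (eqVneq (L^-1%g i) p1) => [/(congr1 val) ea'|/neq_val na'];
case: (eqVneq (L^-1%g j) p0) => [/(congr1 val) eb|/neq_val nb0];
case: (eqVneq (L^-1%g j) p1) => [/(congr1 val) eb'|/neq_val nb1] //=; simpl in *; try lia.
Qed.

Lemma pass_agree a m L (w : 'I_K) : (a + m < w)%N -> (foldl pstep L (iota a m)) w = L w.
Proof.
elim: m a L => [|m IH] a L h /=; first by [].
rewrite IH; last by olia.
case: (pstep_cases L a) => [->//|[p0 [p1 [h0 h1 _ _ ->]]]].
rewrite swap_posE tpermD //; apply/eqP => /(congr1 val) /=; olia.
Qed.

Lemma pass_swap L (q q1 i j : 'I_K) : val q1 = (val q).+1 -> L q = j -> L q1 = i ->
  (i < j)%N -> ~~ unconf delta (s i j) (n i j) ->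
  (forall x, (L^-1%g x < q)%N -> unconf delta (s j x) (n j x)) ->
  ((foldl pstep L (iota 0 k))^-1%g i < (foldl pstep L (iota 0 k))^-1%g j)%N.
Proof.
move=> hq1 hq hq1' hij hc hx.
have qk : (q < k)%N by have := ltn_ord q1; rewrite hq1; olia.
have -> : iota 0 k = iota 0 q ++ iota q (k - q) by rewrite -iotaD; congr iota; olia.
have -> : (k - q = (k - q.+1).+1)%N by olia.
rewrite foldl_cat /=.
set Lq := foldl pstep L (iota 0 q).
have Lq1 : Lq q1 = i by rewrite /Lq pass_agree // add0n hq1.
have Lq0 : forall m, (m <= q)%N -> foldl pstep L (iota 0 m) q = j.
  elim=> [|m IH] hm; first by [].
  have -> : iota 0 m.+1 = iota 0 m ++ [:: m] by rewrite -addn1 iotaD.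
  rewrite foldl_cat /=.
  set Lm := foldl pstep L (iota 0 m).
  have IHm : Lm q = j by apply: IH; olia.
  case: (pstep_cases Lm m) => [->//|[p0 [p1 [h0 h1 _ hc' ->]]]].
  rewrite swap_posE.
  case: (ltnP m.+1 q) => hmq.
    by rewrite tpermD // ; apply/eqP => /(congr1 val) /=; olia.
  have ep1 : p1 = q by apply: val_inj => /=; olia.
  move: hc'; rewrite ep1 IHm.
  set x := Lm p0.
  have : (L^-1%g x < q)%N.
    rewrite ltnNge; apply/negP => hle.
    have : Lm (L^-1%g x) = L (L^-1%g x) by rewrite /Lm pass_agree //; olia.
    rewrite permKV {2}/x => /perm_inj /(congr1 val) /=; olia.
  by move/hx => ->.
have {}Lq0 : Lq q = j by apply: Lq0.
apply: pass_mono => //.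
rewrite /pstep (@pair_itemsE Lq q q1) // Lq0 Lq1 hc (@adj_swapE Lq q q1) //.
rewrite !swap_posV -Lq0 -Lq1 !permK tpermL tpermR hq1; olia.
Qed.
End Pass.

Lemma parity_contra (a b t : nat) : odd a = odd t -> odd b = odd t -> b = a.+1 -> False.
Proof. by move=> ha hb e; rewrite e /= ha in hb; case: (odd t) hb. Qed.

Section Disp.
Variable delta : R.
Variable t : nat.
Variable st : state K.
Variable coin : nat -> bool.
Local Notation S := (sst st).
Local Notation N := (nst st).
Local Notation Rb := (Rbar st).

Definition dstep L p := if odd p == odd t then
      match pair_items L p with
      | Some (i, j) => if unconf delta (S i j) (N i j) && coin p
                       then adj_swap L p else L
      | None => L
      end
    else L.

Lemma displayedE : displayed delta t st coin = foldl dstep Rb (iota 0 K).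
Proof. by []. Qed.

Definition DInv m L := forall w : 'I_K, L w = Rb w \/ exists q q1 : 'I_K,
  [/\ val q1 = (val q).+1, odd q = odd t, (q < m)%N, (w = q \/ w = q1) &
      [/\ L q = Rb q1, L q1 = Rb q & unconf delta (S (Rb q) (Rb q1)) (N (Rb q) (Rb q1))]].

Lemma DInv_mon m L : DInv m L -> DInv m.+1 L.
Proof.
move=> h w; case: (h w) => [->|[q [q1 [? ? hq ? ?]]]]; first by left.
by right; exists q, q1; split => //; apply: ltnW.
Qed.

Lemma dinv_at m L (p0 p1 : 'I_K) : DInv m L -> val p0 = m -> val p1 = m.+1 ->
  odd m = odd t -> L p0 = Rb p0 /\ L p1 = Rb p1.
Proof.
move=> hD h0 h1 hp; split.
  case: (hD p0) => // -[q [q1 [hq1 hqt hqm hw _]]]; exfalso.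
  case: hw => /(congr1 val) e; first by olia.
  by apply: (parity_contra hqt hp); olia.
case: (hD p1) => // -[q [q1 [hq1 hqt hqm hw _]]]; exfalso.
by case: hw => /(congr1 val) e; olia.
Qed.

Lemma dinv_step m L : DInv m L -> DInv m.+1 (dstep L m).
Proof.
move=> hD; rewrite /dstep; case: eqP => hp; last by apply: DInv_mon.
case: (ltnP m.+1 K) => hK; last by rewrite pair_items_out //; apply: DInv_mon.
have h0 : (m < K)%N by lia.
set p0 := Ordinal h0; set p1 := Ordinal hK.
rewrite (@pair_itemsE L p0 p1) //.
have [e0 e1] := @dinv_at m L p0 p1 hD erefl erefl hp.
case: ifP => hc; last by apply: DInv_mon.
rewrite (@adj_swapE L p0 p1) // => w.
have hc' : unconf delta (S (Rb p0) (Rb p1)) (N (Rb p0) (Rb p1)).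
  by move: hc; rewrite e0 e1 => /andP[].
case: (eqVneq w p0) => [->|nw0].
  right; exists p0, p1; split => //; first by left.
  by rewrite !swap_posE tpermL tpermR e0 e1.
case: (eqVneq w p1) => [->|nw1].
  right; exists p0, p1; split => //; first by right.
  by rewrite !swap_posE tpermL tpermR e0 e1.
rewrite swap_posE tpermD 1?eq_sym //.
case: (hD w) => [->|[q [q1 [hq1 hqt hqm hw [f0 f1 f2]]]]]; first by left.
right; exists q, q1; split => //; first by apply: ltnW.
have nq0 : p0 != q by apply/eqP => /(congr1 val) /=; olia.
have nq1 : p1 != q by apply/eqP => /(congr1 val) /=; olia.
have nq10 : p0 != q1.
  by apply/eqP => /(congr1 val) /= e; apply: (parity_contra hqt hp); olia.
have nq11 : p1 != q1 by apply/eqP => /(congr1 val) /=; olia.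
by rewrite !swap_posE !tpermD.
Qed.

Lemma dinv_fold r m L : DInv m L -> DInv (m + r) (foldl dstep L (iota m r)).
Proof.
elim: r m L => [|r IH] m L h /=; first by rewrite addn0.
by rewrite -addSnnS; apply: IH; apply: dinv_step.
Qed.

Lemma dinv_disp : DInv K (displayed delta t st coin).
Proof. by rewrite displayedE; apply: (@dinv_fold K 0 Rb) => w; left. Qed.

Lemma disp_pos (w : 'I_K) : let D := displayed delta t st coin in
  D w = Rb w \/ exists q q1 : 'I_K,
  [/\ val q1 = (val q).+1, (w = q \/ w = q1), D q = Rb q1, D q1 = Rb q &
      unconf delta (S (Rb q) (Rb q1)) (N (Rb q) (Rb q1))].
Proof.
move=> D; case: (dinv_disp w) => [e|[q [q1 [? ? ? ? [? ? ?]]]]]; first by left.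
by right; exists q, q1.
Qed.

Lemma disp_pair (q q1 : 'I_K) : val q1 = (val q).+1 -> odd q = odd t ->
  let D := displayed delta t st coin in
  (D q = Rb q /\ D q1 = Rb q1) \/ (D q = Rb q1 /\ D q1 = Rb q).
Proof.
move=> hq1 hqt D.
have hD := dinv_disp.
case: (hD q) => [e0|[a [a1 [ha1 hat _ hw [f0 f1 _]]]]].
  left; split => //.
  case: (hD q1) => // -[a [a1 [ha1 hat _ hw [f0 f1 _]]]].
  case: hw => /(congr1 val) e; first by exfalso; apply: (parity_contra hqt hat); olia.
  have ea : a = q by apply: val_inj; olia.
  have ea1 : a1 = q1 by apply: val_inj; olia.
  subst a a1; exfalso; move: f0; rewrite -/D e0 => /perm_inj /(congr1 val); olia.
case: hw => /(congr1 val) e.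
  have ea : a = q by apply: val_inj; olia.
  have ea1 : a1 = q1 by apply: val_inj; olia.
  by subst a a1; right.
by exfalso; apply: (parity_contra hat hqt); olia.
Qed.
End Disp.

Section Stats.
Variable t : nat.
Variable L : {perm 'I_K}.
Variable c : nat -> bool.

Definition hstep (sn : ('I_K -> 'I_K -> int) * ('I_K -> 'I_K -> nat)) p :=
    if odd p == odd t then
      match pair_items L p with
      | Some (i, j) =>
          if c p != c p.+1 then
            (upd_s sn.1 i j ((c p : nat)%:Z - (c p.+1 : nat)%:Z), upd_n sn.2 i j)
          else sn
      | None => sn
      end
    else sn.

Lemma upd_statsE sn : upd_stats t L c sn = foldl hstep sn (iota 0 K).
Proof. by []. Qed.

Lemma stats_change ps sn x y : let r := foldl hstep sn ps in
  (r.1 x y = sn.1 x y /\ r.2 x y = sn.2 x y) \/ exists q q1 : 'I_K,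
  [/\ val q1 = (val q).+1, odd q = odd t &
     ((x = L q /\ y = L q1) \/ (x = L q1 /\ y = L q))].
Proof.
elim: ps sn => [|p ps IH] sn /=; first by left.
case: (IH (hstep sn p)) => [[-> ->]|]; last by right.
rewrite /hstep; case: eqP => hp; last by left.
case E: pair_items => [[i j]|]; last by left.
case: ifP => _; last by left.
have [p0 [p1 [h0 h1 -> ->]]] := pair_itemsP E.
case: (boolP ((x == L p0) && (y == L p1))) => [/andP[/eqP ex /eqP ey]|n1].
  by right; exists p0, p1; split => //; [rewrite h0 h1 | rewrite h0 | left].
case: (boolP ((x == L p1) && (y == L p0))) => [/andP[/eqP ex /eqP ey]|n2].
  by right; exists p0, p1; split => //; [rewrite h0 h1 | rewrite h0 | right].
by left; rewrite /upd_s /upd_n /= (negbTE n1) (negbTE n2).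
Qed.
End Stats.

Section Inv.
Variable delta : R.

Definition inv_ok (st : state K) := forall i j : 'I_K, (i < j)%N ->
  ~~ unconf delta (sst st i j) (nst st i j) ->
  ((Rbar st)^-1%g i < (Rbar st)^-1%g j)%N.

Lemma chg t st cn ck x y :
  let D := displayed delta t st cn in
  let sn := upd_stats t D ck (sst st, nst st) in
  (sn.1 x y = sst st x y /\ sn.2 x y = nst st x y) \/ exists q q1 : 'I_K,
  [/\ val q1 = (val q).+1, odd q = odd t &
     ((x = Rbar st q /\ y = Rbar st q1) \/ (x = Rbar st q1 /\ y = Rbar st q))].
Proof.
move=> D sn.
case: (stats_change t D ck (iota 0 K) (sst st, nst st) x y) => [h|[q [q1 [hq1 hqt hxy]]]].
  by left.
right; exists q, q1; split => //.
have := disp_pair delta st cn hq1 hqt; rewrite /= -/D.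
by case=> -[e0 e1]; move: hxy; rewrite e0 e1; tauto.
Qed.

Lemma inv_step t st cn ck : inv_ok st ->
  (forall a b : 'I_K, (a < b)%N ->
     unconf delta (sst (step delta t st cn ck) b a) (nst (step delta t st cn ck) b a)) ->
  inv_ok (step delta t st cn ck).
Proof.
move=> hI.
set D := displayed delta t st cn.
set sn := upd_stats t D ck (sst st, nst st).
have -> : step delta t st cn ck = State (upd_Rbar delta (Rbar st) sn.1 sn.2) sn.1 sn.2 by [].
move=> E2 i j hij /= hc; rewrite upd_RbarE.
set Rb := Rbar st.
case: (ltngtP (Rb^-1%g i) (Rb^-1%g j)) => hpos.
- exact: pass_mono.
- have ho : unconf delta (sst st i j) (nst st i j).
    by apply/negPn/negP => h; have := hI i j hij h; rewrite -/Rb; lia.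
  case: (chg t st cn ck i j) => [[e1 e2]|[q [q1 [hq1 hqt hxy]]]].
    by move: hc; rewrite -/D -/sn e1 e2 ho.
  case: hxy => -[ei ej].
    by move: hpos; rewrite ei ej !permK; olia.
  apply: (@pass_swap delta sn.1 sn.2 E2 Rb q q1 i j) => //.
  move=> x hx.
  case: (ltngtP x j) => hxj.
  + exact: E2.
  + have ho' : unconf delta (sst st j x) (nst st j x).
      apply/negPn/negP => h; have := hI j x hxj h; rewrite -/Rb ej permK; lia.
    case: (chg t st cn ck j x) => [[e1 e2]|[q' [q1' [hq1' hqt' hxy']]]].
      by rewrite -/D -/sn e1 e2.
    exfalso; case: hxy' => -[ej' ex'].
      have eq' : q' = q by apply: (@perm_inj _ Rb); rewrite -ej' ej.
      move: hx; rewrite ex' permK; subst q'; olia.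
    have eq' : q1' = q by apply: (@perm_inj _ Rb); rewrite -ej' ej.
    subst q1'; apply: (parity_contra hqt' hqt); olia.
  + by move: hx; rewrite (val_inj hxj) ej permK ltnn.
- by move/val_inj/perm_inj: hpos => e; move: hij; rewrite e ltnn.
Qed.

Lemma inv_traj (alpha : 'I_K -> R) R0 coin click hor :
  eventE delta alpha R0 coin click hor ->
  forall m, (m <= hor)%N -> inv_ok (traj delta R0 coin click m).
Proof.
move=> hE; elim=> [|m IH] hm.
  move=> i j _ /=; rewrite /unconf /thr mul0r sqrtr0 mulr0 lexx //.
apply: inv_step; first by apply: IH; lia.
case: (hE m.+1 _) => [|_ h2]; first by lia.
by move=> a b hab; apply: h2.
Qed.
End Inv.

Lemma pigeon (L : {perm 'I_K}) (q : 'I_K) :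
  exists i : 'I_K, (i <= q)%N /\ (q <= L^-1%g i)%N.
Proof.
case: (boolP [exists i : 'I_K, (i <= q)%N && (q <= L^-1%g i)%N]).
  by move/existsP => [i /andP[h1 h2]]; exists i.
move/existsPn => H.
have F : forall x : 'I_q.+1, (L^-1%g (inord x) < q)%N.
  move=> x; have := H (inord x).
  have hx : (x < k.+1)%N by have := ltn_ord x; have := ltn_ord q; lia.
  rewrite inordK // -ltnS ltn_ord /= -ltnNge //.
pose f := fun x => Ordinal (F x).
have f_inj : injective f.
  move=> x y /(congr1 val) /= /val_inj /perm_inj /(congr1 (@nat_of_ord K)).
  have hx : (x < k.+1)%N by have := ltn_ord x; have := ltn_ord q; lia.
  have hy : (y < k.+1)%N by have := ltn_ord y; have := ltn_ord q; lia.
  by rewrite !inordK // => /val_inj.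
by have := @leq_card _ _ f f_inj; rewrite !card_ord ltnn.
Qed.

Section Regret.
Variable delta : R.
Variable alpha : 'I_K -> R.
Hypothesis alpha_decr : forall i j : 'I_K, (i < j)%N -> alpha j < alpha i.
Variable st : state K.
Hypothesis Hinv : inv_ok delta st.
Local Notation Rb := (Rbar st).

Definition inPs (i j : 'I_K) : bool :=
  let pi := (val ((Rbar st)^-1 i)%g) in
  let pj := (val ((Rbar st)^-1 j)%g) in
  [&& (i < j)%N, (pi.+1 == pj) || (pj.+1 == pi) & unconf delta (sst st i j) (nst st i j)].

Definition T i j := (inPs i j)%:R * (alpha i - alpha j).
Definition G := \sum_(i < K) \sum_(j < K | (i < j)%N) T i j.

Lemma T_ge0 i j : 0 <= T i j.
Proof.
rewrite /T; case: (boolP (inPs i j)) => [/and3P[hij _ _]|_]; last by rewrite mul0r.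
by rewrite mul1r subr_ge0 ltW // alpha_decr.
Qed.

Lemma G_ge0 : 0 <= G.
Proof. by apply: sumr_ge0 => i _; apply: sumr_ge0 => j _; apply: T_ge0. Qed.

Lemma Tii i : T i i = 0.
Proof. by rewrite /T /inPs ltnn /= mul0r. Qed.

Lemma T_row i j : T i j <= \sum_(j' < K | (i < j')%N) T i j'.
Proof.
case: (ltnP i j) => hij.
  by rewrite (bigD1 j) //= lerDl sumr_ge0 // => x _; apply: T_ge0.
have -> : T i j = 0 by rewrite /T /inPs ltnNge hij /= mul0r.
by apply: sumr_ge0 => x _; apply: T_ge0.
Qed.

Lemma T_le_G i j : T i j <= G.
Proof.
apply: (le_trans (T_row i j)).
by rewrite /G [X in _ <= X](bigD1 i) //= lerDl sumr_ge0 // => x _; apply: sumr_ge0 => y _; apply: T_ge0.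
Qed.

Definition a (w : nat) := alpha (Rb (inord w)).
Definition Tw (w : nat) := T (Rb (inord w.+1)) (Rb (inord w)).

Lemma Tw_ge0 w : 0 <= Tw w.
Proof. exact: T_ge0. Qed.

Lemma d_le w : (w < k)%N -> a w.+1 - a w <= Tw w.
Proof.
move=> hw; rewrite /a /Tw.
set x := Rb (inord w.+1); set y := Rb (inord w).
have px : val (Rb^-1%g x) = w.+1 by rewrite permK; apply: inordK.
have py : val (Rb^-1%g y) = w by rewrite permK; apply: inordK; lia.
case: (ltngtP x y) => hxy.
- have hin : inPs x y.
    rewrite /inPs hxy px py eqxx orbT /=.
    by apply/negPn/negP => hc; have := Hinv hxy hc; move: px py; olia.
  by rewrite /T hin mul1r.
- have := alpha_decr hxy => h.
  by apply: (le_trans _ (T_ge0 x y)); rewrite subr_le0 ltW.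
- by rewrite (val_inj hxy) subrr; apply: T_ge0.
Qed.

Lemma sumT_le_G : \sum_(0 <= w < k) Tw w <= G.
Proof.
pose g (i : 'I_K) := Rb (inord (val (Rb^-1%g i)).-1).
have h1 : \sum_(i < K) T i (g i) <= G.
  by apply: ler_sum => i _; apply: T_row.
apply: le_trans h1.
rewrite (reindex_inj (@perm_inj _ Rb)) /= big_ord_recl.
have -> : T (Rb ord0) (g (Rb ord0)) = 0.
  by rewrite /g permK /= -[inord 0]/(inord (@ord0 k)) inord_val Tii.
rewrite add0r big_mkord; apply: ler_sum => w _.
rewrite /Tw /g permK.
have -> : (inord w.+1 : 'I_K) = lift ord0 w.
  by apply: val_inj; rewrite /= /bump /=; apply: inordK; have := ltn_ord w; lia.
by [].
Qed.

Lemma chain (u v : nat) : (u <= v)%N -> (v <= k)%N -> a v - a u <= G.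
Proof.
move=> huv hvk.
rewrite -telescope_sumr //.
apply: (@le_trans _ _ (\sum_(u <= w < v) Tw w)).
  rewrite big_nat_cond [X in _ <= X]big_nat_cond.
  by apply: ler_sum => w /andP[/andP[_ hw] _]; apply: d_le; lia.
apply: le_trans sumT_le_G.
rewrite (@big_cat_nat _ _ _ u 0 k) //=; last by lia.
rewrite (@big_cat_nat _ _ _ v u k) //=.
rewrite addrC -addrA lerDl addr_ge0 //; apply: sumr_ge0 => *; apply: Tw_ge0.
Qed.

Lemma pos_bound (q p : 'I_K) : (q <= p)%N -> alpha p - alpha (Rb q) <= G.
Proof.
move=> hqp.
have [i [hiq hqi]] := pigeon Rb q.
have hap : alpha p <= alpha i.
  case: (ltnP i p) => h; first by apply/ltW/alpha_decr.
  have -> : i = p by apply: val_inj; olia.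
  by [].
apply: (@le_trans _ _ (alpha i - alpha (Rb q))); first by rewrite lerD2r.
have := @chain q (Rb^-1%g i) hqi.
rewrite /a !inord_val permKV; apply.
by have := ltn_ord (Rb^-1%g i); lia.
Qed.

Variable t : nat.
Variable coin : nat -> bool.

Lemma disp_bound (p : 'I_K) : alpha p - alpha (displayed delta t st coin p) <= G + G.
Proof.
have hG := G_ge0.
have := disp_pos delta t st coin p; rewrite /=.
case=> [->|[q [q1 [hq1 hw e0 e1 hu]]]].
  by apply: (le_trans (pos_bound (leqnn p))); rewrite lerDl.
case: hw => ->.
  rewrite e0.
  have h1 := pos_bound (leqnn q).
  have h2 : alpha (Rb q) - alpha (Rb q1) <= G.
    apply: le_trans (T_le_G (Rb q) (Rb q1)).
    case: (ltngtP (Rb q) (Rb q1)) => h.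
    - have hin : inPs (Rb q) (Rb q1) by rewrite /inPs h !permK /= hq1 eqxx hu.
      by rewrite /T hin mul1r.
    - apply: (le_trans _ (T_ge0 _ _)); rewrite subr_le0; apply/ltW/alpha_decr; exact: h.
    - by rewrite (val_inj h) subrr; apply: T_ge0.
  lra.
rewrite e1.
apply: (le_trans (pos_bound (_ : (q <= q1)%N))); last by rewrite lerDl.
olia.
Qed.

Lemma regret_bound (chi : {perm 'I_K} -> 'I_K -> R) (o : 'I_K) :
  val o = 0%N ->
  (forall i, 0 <= alpha i <= 1) ->
  (forall L k, 0 <= chi L k <= 1) -> A3 chi -> A5 chi ->
  \sum_(x < K) (chi (Rstar K) x * alpha x - chi (displayed delta t st coin) x * alpha (displayed delta t st coin x))
    <= 3 * K%:R * chi (Rstar K) o * G.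
Proof.
move=> ho arange crange hA3 hA5; set D := displayed delta t st coin.
have hG := G_ge0.
have c0 : 0 <= chi (Rstar K) o by have /andP[] := crange (Rstar K) o.
apply: (@le_trans _ _ (\sum_(x < K) (chi (Rstar K) o * (G + G)))).
  apply: ler_sum => x _.
  have cx : 0 <= chi (Rstar K) x by have /andP[] := crange (Rstar K) x.
  have cxo : chi (Rstar K) x <= chi (Rstar K) o.
    case: (posnP x) => hx.
      by have -> : x = o by apply: val_inj; rewrite /= hx ho.
    by apply: hA3; rewrite ho.
  have cD : chi (Rstar K) x <= chi D x by apply: hA5.
  have aD : 0 <= alpha (D x) by have /andP[] := arange (D x).
  have hb := disp_bound x; rewrite -/D in hb.
  nra.
rewrite sumr_const card_ord -mulr_natl.
have hK : 0 <= (K%:R : R) by apply: ler0n.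
have : 0 <= K%:R * chi (Rstar K) o * G by rewrite !mulr_ge0.
lra.
Qed.
End Regret.
End S.

Unset Implicit Arguments.
Set Strict Implicit.

Theorem lemma4 (R : realType) (K : nat) (hK : (0 < K)%N)
  (alpha : 'I_K -> R) (chi : {perm 'I_K} -> 'I_K -> R)
  (alpha_range : forall i, 0 <= alpha i <= 1)
  (chi_range : forall L k, 0 <= chi L k <= 1)
  (hA1 : A1 alpha chi) (hA2 : A2 chi) (hA3 : A3 chi) (hA4 : A4 alpha chi)
  (hA5 : A5 chi)
  (alpha_decr : forall i j : 'I_K, (i < j)%N -> alpha j < alpha i)
  (alpha_pos : forall i, 0 < alpha i)
  (delta : R) (hdelta : 0 < delta < 1)
  (R0 : {perm 'I_K}) (hor : nat) (coin click : nat -> nat -> bool) :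
  eventE delta alpha R0 coin click hor ->
  forall t : nat, (1 <= t <= hor)%N ->
    let Rt := Rdisp delta R0 coin click t in
    \sum_(k < K) (chi (Rstar K) k * alpha k - chi Rt k * alpha (Rt k))
    <= 3 * K%:R * chi (Rstar K) (Ordinal hK) *
       \sum_(i < K) \sum_(j < K | (i < j)%N)
          (inP delta R0 coin click t i j)%:R * (alpha i - alpha j).
Proof.
move: K hK alpha chi alpha_range chi_range hA1 hA2 hA3 hA4 hA5 alpha_decr alpha_pos R0.
case=> [//|k] hK alpha chi arange crange _ _ hA3 _ hA5 adecr _ R0 hE t ht.
have hinv : inv_ok delta (traj delta R0 coin click t.-1).
  by apply: (inv_traj hE); case/andP: ht => h1 h2; lia.
exact: (@regret_bound R k delta alpha adecr (traj delta R0 coin click t.-1) hinv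
          t (coin t) chi (Ordinal hK) erefl arange crange hA3 hA5).
Qed.
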